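(* Let $G$ be a finite free graph. Then $\phi(G)\le \chi(G)+d(G)$. Moreover, if the girth of $G$ satisfies $g(G)\ge 5$, then $\phi(G)\le \chi(G)+4$.
   Context: An independent set of $G$ is a free independent set if it is contained in at least two distinct maximal independent sets of $G$. $G$ is free if every vertex lies in some free independent set. The free chromatic number $\phi(G)$ is the minimum positive integer $t$ such that $V(G)$ can be partitioned into $t$ free independent sets. For an edge $e=uv$, $d(e)=|N(u)\cup N(v)|$ where $N(\cdot)$ is the (open) neighborhood, and $d(G)=\min\{d(e):e\in E(G)\}$. $g(G)$ is the girth (infinite for forests). *)

(* Defs.v *)
(* A finite simple graph is a symmetric irreflexive relation
   e : rel T on a finType T. *)
From mathcomp Require Import all_boot.
Set Implicit Arguments. Unset Strict Implicit. Unset Printing Implicit Defensive.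

Section FreeColoring.
Variables (T : finType) (e : rel T).

Definition nbhd (u : T) : {set T} := [set w | e u w].

Definition indep (S : {set T}) : bool :=
  [forall x in S, forall y in S, ~~ e x y].

Definition maxindep (S : {set T}) : bool :=
  indep S && [forall B : {set T}, (indep B && (S \subset B)) ==> (B == S)].

Definition free_indep (S : {set T}) : bool :=
  indep S &&
  [exists M1 : {set T}, exists M2 : {set T},
     [&& maxindep M1, maxindep M2, M1 != M2, S \subset M1 & S \subset M2]].

Definition free_graph : bool :=
  [forall x, exists S : {set T}, free_indep S && (x \in S)].

Definition proper_colorable (k : nat) : bool :=
  [exists f : {ffun T -> 'I_k}, forall i : 'I_k, indep [set x | f x == i]].

Definition free_colorable (k : nat) : bool :=
  [exists f : {ffun T -> 'I_k}, forall i : 'I_k, free_indep [set x | f x == i]].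

Definition chi : nat := find proper_colorable (iota 0 #|T|.+1).

Definition phi : nat :=
  find (fun t => (0 < t) && free_colorable t) (iota 0 #|T|.+2).

(* d(G) = min over edges uv of |N(u) ∪ N(v)| (default #|T| when edgeless,
   which is an upper bound of all such values) *)
Definition dG : nat :=
  \big[minn/#|T|]_(p : T * T | e p.1 p.2) #|nbhd p.1 :|: nbhd p.2|.

Definition has_cycle_len (k : nat) : bool :=
  (2 < k) && [exists s : k.-tuple T, uniq s && cycle e s].

(* girth: None = infinite (forest) *)
Definition girth : option nat :=
  if [seq k <- iota 3 #|T| | has_cycle_len k] is k :: _ then Some k else None.

Definition girth_at_least (n : nat) : bool :=
  if girth is Some g then n <= g else true.

End FreeColoring.

(* Main.v *)
Require Import Defs.
From mathcomp Require Import all_boot.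
Set Implicit Arguments. Unset Strict Implicit. Unset Printing Implicit Defensive.

Section Aux.
Variables (T : finType) (e : rel T).
Hypothesis e_sym : symmetric e.
Hypothesis e_irr : irreflexive e.

Lemma indepP (S : {set T}) :
  reflect (forall x y, x \in S -> y \in S -> ~~ e x y) (indep e S).
Proof.
apply: (iffP forall_inP) => [H x y xS yS | H x xS].
  by move/forall_inP: (H x xS) => /(_ y yS).
by apply/forall_inP => y yS; apply: H.
Qed.

Lemma maxindepE (M : {set T}) : maxindep e M = maxset (indep e) M.
Proof.
apply/idP/maxsetP.
  case/andP=> iM /forallP H; split => // B iB sMB.
  by move/implyP: (H B) => /(_ (introT andP (conj iB sMB))) /eqP.
case=> iM H; rewrite /maxindep iM /=; apply/forallP => B; apply/implyP.
by case/andP => iB sMB; rewrite (H B iB sMB).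
Qed.

Definition wit (S : {set T}) : Prop :=
  exists a b, e a b /\ forall s, s \in S -> [&& s != a, s != b, ~~ e s a & ~~ e s b].

Definition good S := indep e S /\ wit S.

Lemma good_sub (S S' : {set T}) : S \subset S' -> good S' -> good S.
Proof.
move=> sub [/indepP iS [a [b [ab H]]]]; split.
  by apply/indepP => x y xS yS; apply: iS; apply: (subsetP sub).
by exists a, b; split => // s sS; apply: H; apply: (subsetP sub).
Qed.

Lemma good_free (S : {set T}) : good S -> free_indep e S.
Proof.
case=> iS [a [b [ab H]]]; rewrite /free_indep iS /=.
have iSa c : (c == a) || (c == b) -> indep e (c |: S).
  move=> cab; apply/indepP => x y; rewrite !in_setU1.
  have Hc s : s \in S -> ~~ e s c /\ ~~ e c s.
    move=> sS; case/and4P: (H s sS) => _ _ h1 h2.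
    case/orP: cab => /eqP ->; split => //; by rewrite e_sym.
  case/orP=> [/eqP->|xS]; case/orP=> [/eqP->|yS].
  - by rewrite e_irr.
  - by case: (Hc y yS).
  - by case: (Hc x xS).
  - by move/indepP: iS; apply.
have ha : (a == a) || (a == b) by rewrite eqxx.
have hb : (b == a) || (b == b) by rewrite eqxx orbT.
have [M1 mM1 sM1] := maxset_exists (iSa a ha).
have [M2 mM2 sM2] := maxset_exists (iSa b hb).
apply/existsP; exists M1; apply/existsP; exists M2.
rewrite !maxindepE mM1 mM2.
rewrite (subset_trans (subsetUr _ _) sM1) (subset_trans (subsetUr _ _) sM2) !andbT /=.
apply/eqP => E; move: (maxsetp mM1) => /indepP /(_ a b).
have aM1 : a \in M1 by apply: (subsetP sM1); rewrite setU11.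
have bM1 : b \in M1 by rewrite E; apply: (subsetP sM2); rewrite setU11.
by rewrite aM1 bM1 ab; move/(_ isT isT).
Qed.

Lemma free_wit (S : {set T}) : free_indep e S -> wit S.
Proof.
case/andP=> iS /existsP[M1 /existsP[M2 /and5P[m1 m2 ne s1 s2]]].
rewrite !maxindepE in m1 m2.
have nsub : ~~ (M1 \subset M2).
  apply/negP => sub; move/eqP: ne; apply; exact: esym (maxsetsup m1 (maxsetp m2) sub).
case/subsetPn: nsub => z zM1 zM2.
have : ~~ indep e (z |: M2).
  apply/negP => iz; move: (maxsetsup m2 iz (subsetUr _ _)) => E.
  by move: zM2; rewrite -E setU11.
case: (boolP [exists w in M2, e z w]) => [/exists_inP[w wM2 zw]|/exists_inP nE]; last first.
  case/negP; apply/indepP => x y; rewrite !in_setU1.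
  move/indepP: (maxsetp m2) => i2.
  case/orP=> [/eqP->|xS]; case/orP=> [/eqP->|yS]; first by rewrite e_irr.
  - by apply/negP => h; apply: nE; exists y.
  - by rewrite e_sym; apply/negP => h; apply: nE; exists x.
  - by apply: i2.
exists z, w; split => // s sS.
move/indepP: (maxsetp m1) => i1; move/indepP: (maxsetp m2) => i2.
have sM1 := subsetP s1 s sS; have sM2 := subsetP s2 s sS.
apply/and4P; split.
- by apply/eqP => E; move: zM2; rewrite -E sM2.
- apply/eqP => E; move: (i1 z s zM1 sM1); by rewrite E zw.
- by rewrite e_sym; apply: i1.
- by apply: i2.
Qed.

Lemma good_single x : free_graph e -> good [set x].
Proof.
move/forallP/(_ x)/existsP => [S /andP[fS xS]].
move: (free_wit fS) => W.
have : good S by split => //; case/andP: fS.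
apply: good_sub; by rewrite sub1set.
Qed.

Lemma construct k m (f : {ffun T -> 'I_k}) (D : {set T}) (g : T -> 'I_m) u v :
  (forall i, indep e [set x | f x == i]) -> e u v ->
  (forall z, e u z || e v z -> z \in D) ->
  (forall j, good [set z | (z \in D) && (g z == j)]) -> free_colorable e (k + m).
Proof.
move=> fP uv DP gP.
apply/existsP; exists [ffun z => if z \in D then rshift k (g z) else lshift m (f z)].
apply/forallP => i; apply: good_free.
case: (splitP i) => [j ij | j ij].
  apply: (@good_sub _ [set x | (x \notin D) && (f x == j)]).
    apply/subsetP => x; rewrite !inE ffunE.
    case: (x \in D) => /eqP /(congr1 val) /=; rewrite ij.
      by move=> E; have := ltn_ord j; rewrite -E ltnNge leq_addr.
    by move=> E; apply/eqP/val_inj.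
  split.
    apply/indepP => x y; rewrite !inE => /andP[_ xj] /andP[_ yj].
    by move/indepP: (fP j); apply; rewrite inE.
  exists u, v; split => // s; rewrite inE => /andP[sD _].
  have uD : u \in D by apply: DP; rewrite e_sym uv orbT.
  have vD : v \in D by apply: DP; rewrite uv.
  apply/and4P; split.
  - by apply/eqP => E; move: sD; rewrite E uD.
  - by apply/eqP => E; move: sD; rewrite E vD.
  - by apply/negP => h; move/negP: sD; apply; apply: DP; rewrite (e_sym u) h.
  - by apply/negP => h; move/negP: sD; apply; apply: DP; rewrite (e_sym v) h orbT.
apply: (good_sub _ (gP j)).
apply/subsetP => x; rewrite !inE ffunE.
case: (x \in D) => /eqP /(congr1 val) /=; rewrite ij.
  by move/eqP; rewrite eqn_add2l => /eqP E; rewrite /=; apply/eqP/val_inj.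
by move=> E; have := ltn_ord (f x); rewrite E ltnNge leq_addr.
Qed.

Lemma good0 (S : {set T}) u v : e u v -> S = set0 -> good S.
Proof.
move=> uv ->; split; first by apply/indepP => x y; rewrite inE.
by exists u, v; split => // s; rewrite inE.
Qed.

Definition An x y := nbhd e x :\ y.

Lemma core k (f : {ffun T -> 'I_k}) x y :
  free_graph e -> (forall i, indep e [set z | f z == i]) -> e x y ->
  good (An x y) -> good (An y x) -> free_colorable e (k + 4).
Proof.
move=> Gf fP xy gA gB.
pose val4 z := if z == x then 0 else if z == y then 1 else if z \in nbhd e x then 2 else 3.
have v4 z : val4 z < 4 by rewrite /val4; case: ifP => //; case: ifP => //; case: ifP.
apply: (construct fP xy (D := nbhd e x :|: nbhd e y) (g := fun z => inord (val4 z))).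
  by move=> z; rewrite !inE.
move=> j.
have cl z : (z \in nbhd e x :|: nbhd e y) && (inord (val4 z) == j :> 'I_4) ->
    (z \in nbhd e x :|: nbhd e y) /\ val4 z = j.
  by case/andP=> zD /eqP <-; rewrite inordK.
case: j cl => [[|[|[|[|j]]]] Hj] //= cl.
- apply: (good_sub _ (good_single x Gf)); apply/subsetP => z; rewrite in_set => /cl [_]; rewrite ?in_set1 /An ?inE.
  by rewrite /val4; case: ifP => //; case: ifP => //; case: ifP.
- apply: (good_sub _ (good_single y Gf)); apply/subsetP => z; rewrite in_set => /cl [_]; rewrite ?in_set1 /An ?inE.
  by rewrite /val4; case: ifP => //; case: ifP => //; case: ifP.
- apply: (good_sub _ gA); apply/subsetP => z; rewrite in_set => /cl [_]; rewrite ?in_set1 /An ?inE.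
  rewrite /val4; case: ifP => //; case: ifP => //; case: ifP => //.
  by rewrite inE => ->.
- apply: (good_sub _ gB); apply/subsetP => z; rewrite in_set => /cl []; rewrite /An.
  rewrite /val4; case: ifP => //; case: ifP => // zy zx.
  by case: ifP => // zN; rewrite in_setU zN /= => zB _; rewrite in_setD1 zx zB.
Qed.

Lemma goodA x y b
  (noTri : forall a b c, e a b -> e b c -> e c a -> False)
  (noC4 : forall a b c d, a != c -> b != d -> e a b -> e b c -> e c d -> e d a -> False) :
  e x y -> b \in An y x -> good (An x y).
Proof.
move=> xy; rewrite /An !inE => /andP[bx yb].
split.
  apply/indepP => a1 a2; rewrite !inE => /andP[_ xa1] /andP[_ xa2].
  by apply/negP => h; apply: (noTri x a1 a2) => //; rewrite e_sym.
exists y, b; split => // s; rewrite !inE => /andP[sy xs].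
apply/and4P; split => //.
- by apply/eqP => E; subst s; apply: (noTri x y b) => //; rewrite e_sym.
- by apply/negP => h; apply: (noTri x s y) => //; rewrite e_sym.
- by apply/negP => h; apply: (noC4 x s b y) => //; rewrite ?(eq_sym x) // e_sym.
Qed.

Lemma leafcase x y : free_graph e -> e x y -> An y x = set0 ->
  (forall a, a \in An x y -> An a x = set0) -> good (An x y).
Proof.
move=> Gf xy By Aa.
have leaf a q : a \in An x y -> e a q -> q = x.
  move=> aA aq; apply/eqP; apply/negPn/negP => qx.
  by have := Aa a aA; move/setP/(_ q); rewrite !inE qx aq.
split.
  apply/indepP => a1 a2 a1A a2A; apply/negP => h.
  have := leaf _ _ a1A h; move: a2A; rewrite /An !inE => /andP[_ xa2] E.
  by move: xa2; rewrite E e_irr.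
have [_ [p [q [pq H]]]] := good_single y Gf.
have /and4P[yp yq ny_p ny_q] := H y (set11 y).
have px : p != x by apply/eqP => E; move: ny_p; rewrite E e_sym xy.
have qx : q != x by apply/eqP => E; move: ny_q; rewrite E e_sym xy.
exists p, q; split => // s sA.
apply/and4P; split.
- by apply/eqP => E; rewrite E in sA; move: qx; rewrite (leaf p q sA pq) eqxx.
- apply/eqP => E; rewrite E in sA; have qp : e q p by rewrite e_sym.
  by move: px; rewrite (leaf q p sA qp) eqxx.
- by apply/negP => h; move: px; rewrite (leaf _ _ sA h) eqxx.
- by apply/negP => h; move: qx; rewrite (leaf _ _ sA h) eqxx.
Qed.

Lemma part2 k (f : {ffun T -> 'I_k}) u v :
  free_graph e -> (forall i, indep e [set z | f z == i]) -> e u v ->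
  (forall a b c, e a b -> e b c -> e c a -> False) ->
  (forall a b c d, a != c -> b != d -> e a b -> e b c -> e c d -> e d a -> False) ->
  free_colorable e (k + 4).
Proof.
move=> Gf fP uv noTri noC4.
case: (boolP [exists p : T * T, [&& e p.1 p.2, An p.1 p.2 != set0 & An p.2 p.1 != set0]]).
  case/existsP => [[x y]] /= /and3P[xy /set0Pn[a aA] /set0Pn[b bB]].
  have yx : e y x by rewrite e_sym.
  exact: (core Gf fP xy (goodA noTri noC4 xy bB) (goodA noTri noC4 yx aA)).
move/existsPn => nC1.
case: (boolP [exists p : T * T, [&& e p.1 p.2, An p.1 p.2 == set0 & An p.2 p.1 == set0]]).
  case/existsP => [[x y]] /= /and3P[xy /eqP A0 /eqP B0].
  exact: (core Gf fP xy (good0 xy A0) (good0 xy B0)).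
move/existsPn => nC2.
have key x y : e x y -> An x y != set0 -> free_colorable e (k + 4).
  move=> xy Ane.
  have By : An y x = set0.
    by apply/eqP; move: (nC1 (x, y)); rewrite /= xy Ane /= negbK.
  have Aa a : a \in An x y -> An a x = set0.
    move=> aA; have xa : e x a by move: aA; rewrite /An !inE => /andP[].
    have ay : a != y by move: aA; rewrite /An !inE => /andP[].
    have Ne : An x a != set0.
      by apply/set0Pn; exists y; rewrite /An !inE xy eq_sym ay.
    by apply/eqP; move: (nC1 (x, a)); rewrite /= xa Ne /= negbK.
  exact: (core Gf fP xy (leafcase Gf xy By Aa) (good0 xy By)).
move: (nC2 (u, v)); rewrite /= uv /=.
case: (boolP (An u v == set0)) => [_ /= h|h _]; last exact: key uv h.
have vu : e v u by rewrite e_sym.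
exact: key vu h.
Qed.

Lemma part1 k (f : {ffun T -> 'I_k}) u v :
  free_graph e -> (forall i, indep e [set z | f z == i]) -> e u v ->
  free_colorable e (k + #|nbhd e u :|: nbhd e v|).
Proof.
move=> Gf fP uv.
have uD : u \in nbhd e u :|: nbhd e v by rewrite !inE e_sym uv orbT.
apply: (construct fP uv (D := nbhd e u :|: nbhd e v) (g := enum_rank_in uD)); first by move=> z; rewrite !inE.
move=> j; apply: (good_sub _ (good_single (enum_val j) Gf)).
apply/subsetP => z; rewrite in_set => /andP[zD /eqP <-].
by rewrite in_set1 enum_rankK_in.
Qed.

Lemma chi_spec : proper_colorable e (chi e) /\ chi e <= #|T|.
Proof.
have PT : proper_colorable e #|T|.
  apply/existsP; exists [ffun x => enum_rank x]; apply/forallP => i.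
  apply/indepP => x y; rewrite !inE !ffunE => /eqP xi /eqP yi.
  by rewrite -xi in yi; rewrite (enum_rank_inj yi) e_irr.
have hP : has (proper_colorable e) (iota 0 #|T|.+1).
  apply/hasP; exists #|T|; [rewrite mem_iota add0n ltnSn andbT; exact: leq0n | exact: PT].
have lt := hP; rewrite has_find size_iota in lt.
split; last by rewrite /chi -ltnS.
by have := nth_find 0 hP; rewrite nth_iota.
Qed.

Lemma phi_le t : 0 < t -> free_colorable e t -> phi e <= t.
Proof.
move=> t0 ft; rewrite /phi.
case: (ltnP t #|T|.+2) => tl; last first.
  by apply: leq_trans (find_size _ _) _; rewrite size_iota.
rewrite leqNgt; apply/negP => /(before_find 0).
by rewrite nth_iota // t0 ft.
Qed.

Lemma dG_spec u0 v0 : e u0 v0 ->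
  exists u v, e u v /\ #|nbhd e u :|: nbhd e v| <= dG e.
Proof.
move=> e0.
have : (dG e == #|T|) ||
  [exists p : T * T, e p.1 p.2 && (#|nbhd e p.1 :|: nbhd e p.2| == dG e)].
  rewrite /dG; elim/big_rec: _ => [|p r ep IH]; first by rewrite eqxx.
  rewrite /minn; case: ltnP => h.
    by apply/orP; right; apply/existsP; exists p; rewrite ep eqxx.
  exact: IH.
case/orP => [/eqP E|/existsP[[u v] /andP[uv /eqP E]]].
  by exists u0, v0; split => //; rewrite E max_card.
by exists u, v; split => //; rewrite E.
Qed.

Lemma ne_of x y : e x y -> x != y.
Proof. by move=> h; apply/eqP => E; move: h; rewrite E e_irr. Qed.

Lemma noTri_of : girth_at_least e 5 -> forall a b c, e a b -> e b c -> e c a -> False.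
Proof.
move=> g a b c ab bc ca.
have h3 : has_cycle_len e 3.
  rewrite /has_cycle_len /=; apply/existsP; exists [tuple a; b; c].
  rewrite /= !inE ab bc ca /=.
  by rewrite (negbTE (ne_of ab)) (negbTE (ne_of bc)) eq_sym (negbTE (ne_of ca)).
have : 0 < #|T| by apply/card_gt0P; exists a.
case E: #|T| => [|n] // _.
by move: g; rewrite /girth_at_least /girth E /= h3.
Qed.

Lemma noC4_of : girth_at_least e 5 ->
  forall a b c d, a != c -> b != d -> e a b -> e b c -> e c d -> e d a -> False.
Proof.
move=> g a b c d ac bd ab bc cd da.
have h4 : has_cycle_len e 4.
  rewrite /has_cycle_len /=; apply/existsP; exists [tuple a; b; c; d].
  rewrite /= !inE ab bc cd da /= (negbTE (ne_of ab)) (negbTE (ne_of bc)) (negbTE (ne_of cd)).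
  by rewrite (negbTE ac) (negbTE bd) eq_sym (negbTE (ne_of da)).
have : 1 < #|T|.
  by apply/card_gt1P; exists a, b; rewrite (ne_of ab).
case E: #|T| => [|[|n]] // _.
move: g; rewrite /girth_at_least /girth E /=.
by case: (has_cycle_len e 3) => //=; rewrite h4.
Qed.

Lemma has_edge : 0 < #|T| -> free_graph e -> exists u v, e u v.
Proof.
move=> /card_gt0P[x _] Gf.
have [_ [p [q [pq _]]]] := good_single x Gf.
by exists p, q.
Qed.
End Aux.

Theorem mainTheorem4 (T : finType) (e : rel T)
  (e_sym : symmetric e) (e_irr : irreflexive e) (T_ne : 0 < #|T|)
  (G_free : free_graph e) :
  phi e <= chi e + dG e /\ (girth_at_least e 5 -> phi e <= chi e + 4).
Proof.
have [/existsP[f /forallP fP] _] := chi_spec e_irr.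
have [u0 [v0 uv0]] := has_edge e_sym e_irr T_ne G_free.
split.
  have [u [v [uv Hd]]] := dG_spec uv0.
  apply: leq_trans (leq_add (leqnn _) Hd).
  apply: phi_le; first by rewrite addn_gt0; apply/orP; right; apply/card_gt0P; exists v; rewrite !inE uv.
  exact: (part1 e_sym e_irr G_free fP uv).
move=> g.
apply: phi_le; first by rewrite addn4.
exact: (part2 e_sym e_irr G_free fP uv0 (noTri_of e_irr g) (noC4_of e_irr g)).
Qed.
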